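(* Let $M\cong\mathbb{Z}^k$ be a lattice with dual $N=\operatorname{Hom}(M,\mathbb{Z})$, let $\mathbb{T}=\operatorname{Spec}\mathbb{C}[M]$, and let $X=\operatorname{Spec}A$ be an affine $\mathbb{T}$-variety. Then there is a unique splitting of the acting torus $\mathbb{T}=\mathbb{T}_1\times\mathbb{T}_2$ (induced by a splitting of lattices $N=N_1\oplus N_2$) such that: (1) the action of $\mathbb{T}_1$ on $X$ is fix-pointed; (2) the torus $\mathbb{T}_2$ acts (not necessarily faithfully) on $X_H:=X/\!/\mathbb{T}_1$, and this action is hyperbolic; (3) the quotient morphism $\pi:X\to X/\!/\mathbb{T}$ factorizes as the composition $X\to X_H\to X_H/\!/\mathbb{T}_2\cong X/\!/\mathbb{T}$, where the first map is the quotient by $\mathbb{T}_1$ and the second is the quotient by $\mathbb{T}_2$.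
   Context: The base field is $\mathbb{C}$. A $\mathbb{T}$-variety is a normal variety with a faithful algebraic $\mathbb{T}$-action. For an affine variety $Y$ with an action of a torus $\mathbb{T}'$, the algebraic quotient is $Y/\!/\mathbb{T}'=\operatorname{Spec}(\mathbb{C}[Y]^{\mathbb{T}'})$. A $\mathbb{T}'$-action on an affine variety $Y=\operatorname{Spec}B$, with character lattice $M'$, corresponds to an $M'$-grading $B=\bigoplus_{u\in M'}B_u$, where $B_u=\{f\in B:\lambda\cdot f=\chi^u(\lambda)f\}$. The weight monoid is $\{u\in M': B_u\neq 0\}$ and the weight cone $\omega\subseteq M'_{\mathbb{Q}}=M'\otimes\mathbb{Q}$ is the cone it spans. The action is called fix-pointed if the only linear subspace contained in $\omega$ is $\{0\}$, and hyperbolic if $\omega=M'_{\mathbb{Q}}$. *)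

(* Defs.v *)
From HB Require Import structures.
From mathcomp Require Import all_boot all_order all_algebra.
From mathcomp Require Import reals complex.
Set Implicit Arguments. Unset Strict Implicit. Unset Printing Implicit Defensive.
Import Order.TTheory GRing.Theory Num.Theory.
Local Open Scope ring_scope.

(* Conventions.
   - Character lattice M = Z^k  is  'rV[int]_k (row vectors),
     cocharacter lattice N = Hom(M,Z) is 'cV[int]_k, pairing <u,n> = u *m n.
   - An affine T-variety X = Spec A, T = Spec C[M], is given by the C-algebra A
     together with the M-grading  part : M -> (A -> Prop),  part u = A_u.
   - Restricting/coarsening the grading along a lattice map M -> M', u |-> u *m F
     (F : 'M[int]_k) gives the grading of the induced action of the torus with
     character lattice M' = M *m F. *)

Section TVar.
Variables (C : fieldType) (A : comAlgType C) (k : nat).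
Local Notation M := 'rV[int]_k.
Local Notation MQ := 'rV[rat]_k.

Definition is_grading (part : M -> A -> Prop) : Prop :=
  [/\ (forall u, part u 0) /\
      (forall u (c : C) a b, part u a -> part u b -> part u (c *: a + b)),
      forall u v a b, part u a -> part v b -> part (u + v) (a * b),
      part 0 1,
      forall a : A, exists (s : seq M) (f : M -> A),
        [/\ uniq s, forall u, part u (f u) & a = \sum_(u <- s) f u]
    & forall (s : seq M) (f : M -> A), uniq s -> (forall u, part u (f u)) ->
        \sum_(u <- s) f u = 0 -> forall u, u \in s -> f u = 0].

Definition coarse (part : M -> A -> Prop) (F : 'M[int]_k) (w : M) : A -> Prop :=
  fun a => exists (s : seq M) (f : M -> A),
    [/\ forall u, part u (f u), forall u, u \in s -> u *m F = w
      & a = \sum_(u <- s) f u].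

Definition weights (B : A -> Prop) (Q : M -> A -> Prop) (w : M) : Prop :=
  exists a, [/\ B a, Q w a & a <> 0].

Definition ratrow (u : M) : MQ := map_mx (fun z : int => z%:~R) u.

Definition wcone (S : M -> Prop) : MQ -> Prop :=
  fun v => exists (s : seq M) (c : M -> rat),
    (forall u, u \in s -> S u /\ 0 <= c u) /\
    v = \sum_(u <- s) c u *: ratrow u.

Definition fix_pointed_cone (om : MQ -> Prop) : Prop :=
  forall V : MQ -> Prop,
    V 0 -> (forall x y, V x -> V y -> V (x + y)) ->
    (forall (c : rat) x, V x -> V (c *: x)) ->
    (forall x, V x -> om x) -> forall x, V x -> x = 0.

Definition hyperbolic_cone (F : 'M[int]_k) (om : MQ -> Prop) : Prop :=
  forall v, om v <-> exists x : MQ, v = x *m map_mx (fun z : int => z%:~R) F.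

(* Faithfulness of the T-action on C-points: T(C) = Hom(M, C^x), t acts on A_u
   by multiplication with t u; the action is faithful iff only the trivial
   character acts trivially. *)
Definition faithful_grading (part : M -> A -> Prop) : Prop :=
  forall t : M -> C, (forall u v, t (u + v) = t u * t v) -> (forall u, t u != 0) ->
    (forall u, weights (fun _ => True) part u -> t u = 1) -> forall u, t u = 1.

Definition is_domain : Prop := forall a b : A, a * b = 0 -> a = 0 \/ b = 0.

(* Normal: integrally closed in its field of fractions; a/b (b <> 0) root of a
   monic polynomial  x^n + sum_{i<n} c_i x^i  with c_i in A  implies b | a. *)
Definition is_normal : Prop :=
  forall (a b : A), b != 0 -> forall (n : nat) (c : nat -> A),
    a ^+ n + \sum_(i < n) c i * a ^+ i * b ^+ (n - i) = 0 ->
    exists x, a = x * b.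

Definition fin_gen : Prop :=
  exists gens : seq A, forall S : A -> Prop,
    S 1 -> (forall x y, S x -> S y -> S (x + y)) ->
    (forall x y, S x -> S y -> S (x * y)) -> (forall (c : C) x, S x -> S (c *: x)) ->
    (forall g, g \in gens -> S g) -> forall a, S a.

Definition affine_T_variety (part : M -> A -> Prop) : Prop :=
  [/\ fin_gen, is_domain, is_normal, is_grading part & faithful_grading part].

(* Splitting N = N1 (+) N2 encoded by an idempotent P acting on N = 'cV_k:
   N1 = image of P, N2 = kernel of P. Then Hom(N1,Z) ~= M *m P and
   Hom(N2,Z) ~= M *m (1 - P); the T1-weight of A_u is u *m P, the T2-weight
   is u *m (1 - P). *)
Definition lattice_splitting (P : 'M[int]_k) : Prop := P *m P = P.

Definition N1_of (P : 'M[int]_k) : 'cV[int]_k -> Prop :=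
  fun n => exists m, n = P *m m.

Definition splitting_props (part : M -> A -> Prop) (P : 'M[int]_k) : Prop :=
  let Q2 := 1%:M - P in
  let AT1 := coarse part P 0 in                         (* C[X_H] = A^{T1} *)
  let gradeH := fun w a => AT1 a /\ coarse part Q2 w a in
  [/\
      fix_pointed_cone (wcone (weights (fun _ => True) (coarse part P))),
      hyperbolic_cone Q2 (wcone (weights AT1 (coarse part Q2)))
    & (* (3) (A^{T1})^{T2} = A^T inside A, so X -> X_H -> X_H//T2 = X//T is pi *)
      forall a, gradeH 0 a <-> part 0 a].

End TVar.

(* Main.v *)
Require Import Defs.
From HB Require Import structures.
From mathcomp Require Import all_boot all_order all_algebra.
From mathcomp Require Import reals complex.
From mathcomp Require Import zify ring.
From Stdlib Require Import Classical.
Set Implicit Arguments. Unset Strict Implicit. Unset Printing Implicit Defensive.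
Import Order.TTheory GRing.Theory Num.Theory.
Local Open Scope ring_scope.

Definition ratM m n (X : 'M[int]_(m,n)) : 'M[rat]_(m,n) :=
  map_mx (fun z : int => z%:~R) X.

Lemma ratMM m n p (X : 'M[int]_(m,n)) (Y : 'M[int]_(n,p)) :
  ratM (X *m Y) = ratM X *m ratM Y.
Proof. by rewrite /ratM map_mxM. Qed.

Lemma ratM_inj m n (X Y : 'M[int]_(m,n)) : ratM X = ratM Y -> X = Y.
Proof.
move=> h; apply/matrixP => i j.
have := congr1 (fun Z : 'M[rat]_(m,n) => Z i j) h; rewrite /ratM /= !mxE; exact: intr_inj.
Qed.

Lemma sum_delta (V : nmodType) (I : eqType) (t : seq I) x (G : I -> V) :
  uniq t -> x \in t -> \sum_(u <- t) (if u == x then G u else 0) = G x.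
Proof.
move=> ut xt; rewrite (big_rem x xt) eqxx /= big1_seq; first by rewrite addr0.
move=> u /andP[_ ur]; case: eqP => // ux; move: ur; rewrite ux.
by rewrite mem_rem_uniqF.
Qed.

Lemma scale_int m n (B : 'M[rat]_(m,n)) :
  exists (Bi : 'M[int]_(m,n)) (D : rat), D != 0 /\ ratM Bi = D *: B.
Proof.
exists (\matrix_(i,j) (numq (B i j) * \prod_(p : 'I_m * 'I_n | p != (i,j)) denq (B p.1 p.2))).
exists (\prod_(p : 'I_m * 'I_n) (denq (B p.1 p.2))%:~R).
split.
  by apply/prodf_neq0 => p _; rewrite intr_eq0 denq_neq0.
apply/matrixP => i j; rewrite /ratM !mxE [in RHS](bigD1 (i,j)) //= intrM rmorph_prod.
rewrite -[X in _ = _ * X](divq_num_den (B i j)).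
have h : (denq (B i j))%:~R != 0 :> rat by rewrite intr_eq0 denq_neq0.
set P := \prod_(_ | _) _.
move: h; set a := (denq _)%:~R; set b := (numq _)%:~R => h.
by field.
Qed.

Section Idem.
Variable k : nat.
Variable L : 'rV[rat]_k -> Prop.
Hypothesis L0 : L 0.
Hypothesis LD : forall x y, L x -> L y -> L (x + y).
Hypothesis LZ : forall (c : rat) x, L x -> L (c *: x).

Lemma exists_basis : exists B : 'M[rat]_k, forall x, L x <-> (x <= B)%MS.
Proof.
have step : forall n (B : 'M[rat]_k), (k - \rank B <= n)%N ->
    (forall y : 'rV_k, (y <= B)%MS -> L y) ->
    exists B' : 'M[rat]_k, forall x, L x <-> (x <= B')%MS.
  elim=> [|n IH] B hn hB.
    exists B => x; split; last exact: hB.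
    move=> _; apply: submx_full; rewrite /row_full.
    have := rank_leq_col B; lia.
  case: (classic (forall x, L x -> (x <= B)%MS)) => [h|h].
    by exists B => x; split; [exact: h| exact: hB].
  apply not_all_ex_not in h as [x hx]; apply imply_to_and in hx as [Lx nx].
  apply: (IH (B + x)%MS).
    have : (B < B + x)%MS.
      rewrite ltmxE addsmxSl /=; apply/negP => h; apply: nx.
      exact: submx_trans (addsmxSr B x) h.
    move/rank_ltmx; have := rank_leq_col (B + x)%MS; lia.
  move=> y /sub_addsmxP [[u1 u2] /= ->].
  apply: LD; first by apply: hB; exact: submxMl.
  by rewrite [u2]mx11_scalar mul_scalar_mx; apply: LZ.
apply: (step k 0); first by rewrite leq_subr.
by move=> y; rewrite submx0 => /eqP ->.
Qed.

Lemma exists_idem : exists P : 'M[int]_k,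
  P *m P = P /\ forall x, L x <-> x *m ratM P = 0.
Proof.
have [B hB] := exists_basis.
have [Bi [D [D0 hBi]]] := scale_int B.
have [U Uu [R Ru [d _ hS]]] := int_Smith_normal_form Bi.
pose e : 'rV[int]_k := \row_i ((d`_i != 0)%:R).
pose E := invmx R *m diag_mx e *m R.
have hE0 : diag_mx e *m diag_mx e = diag_mx e.
  rewrite mulmx_diag; congr diag_mx; apply/rowP => i; rewrite !mxE.
  by case: (d`_i != 0); rewrite ?mulr0 ?mulr1.
have hE : E *m E = E.
  rewrite /E -!mulmxA (mulmxA R) (mulmxV Ru) mul1mx (mulmxA (diag_mx e)) hE0.
  by rewrite mulmxA.
exists (1%:M - E); split.
  by rewrite mulmxBl mul1mx mulmxBr mulmx1 hE subrr subr0.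
have kerE : forall x : 'rV[rat]_k, x *m ratM (1%:M - E) = 0 <-> (x <= ratM E)%MS.
  move=> x; rewrite /ratM map_mxB map_mx1 mulmxBr mulmx1; split.
    by move/eqP; rewrite subr_eq0 => /eqP {1}->; exact: submxMl.
  case/submxP => y ->; by rewrite -mulmxA -map_mxM hE subrr.
set Dg := \matrix_(i, j) _ in hS.
have hDg : ratM Dg = diag_mx (\row_i ((d`_i)%:~R : rat)).
  apply/matrixP => i j; rewrite /ratM !mxE.
  first [by rewrite rmorphMn | by rewrite intrMn | by case: (i == j); rewrite ?mulr1n ?mulr0n | by case: (i == j :> nat) | idtac "FAIL"].
have hDe : ratM (diag_mx e) = diag_mx (\row_i (((d`_i != 0)%:R : int)%:~R : rat)).
  apply/matrixP => i j; rewrite /ratM !mxE.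
  first [by rewrite rmorphMn | by rewrite intrMn | by case: (i == j); rewrite ?mulr1n ?mulr0n | by case: (i == j :> nat) | idtac "FAIL"].
have h1 : (B == ratM Bi)%MS.
  by rewrite hBi; apply/eqmxP; apply: eqmx_sym; exact: eqmx_scale.
have h2 : (ratM Bi == ratM Dg *m ratM R)%MS.
  rewrite hS !ratMM; apply/andP; split; first by rewrite -mulmxA; exact: submxMl.
  have -> : ratM Dg *m ratM R = ratM (invmx U) *m (ratM U *m ratM Dg *m ratM R).
    by rewrite !mulmxA -(ratMM (invmx U) U) mulVmx // /ratM map_mx1 mul1mx.
  exact: submxMl.
have h3 : (ratM Dg == ratM (diag_mx e))%MS.
  apply/andP; split.
    apply/submxP; exists (ratM Dg).
    rewrite hDg hDe mulmx_diag; congr diag_mx; apply/rowP => i; rewrite !mxE.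
    by case: (d`_i =P 0) => [->|_]; rewrite ?mul0r ?mulr1.
  apply/submxP; exists (diag_mx (\row_i (if d`_i == 0 then 0 else ((d`_i)%:~R : rat)^-1))).
  rewrite hDg hDe mulmx_diag; congr diag_mx; apply/rowP => i; rewrite !mxE.
  case: (d`_i =P 0) => [->|/eqP h]; first by rewrite mul0r.
  by rewrite mulVf // intr_eq0.
have h4 : (ratM (diag_mx e) *m ratM R == ratM E)%MS.
  apply/andP; split.
    have -> : ratM (diag_mx e) *m ratM R = ratM R *m ratM E.
      by rewrite /E !ratMM !mulmxA -(ratMM R (invmx R)) mulmxV // /ratM map_mx1 mul1mx.
    exact: submxMl.
  rewrite /E !ratMM -!mulmxA; exact: submxMl.
have hBE : (B :=: ratM E)%MS.
  apply: eqmx_trans (eqmxP h1) _; apply: eqmx_trans (eqmxP h2) _.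
  apply: eqmx_trans _ (eqmxP h4); apply: eqmxMr; exact/eqmxP.
by move=> x; rewrite kerE -hBE.
Qed.
End Idem.

Section Cone.
Variable k : nat.
Local Notation M := 'rV[int]_k.

Lemma ratrowM (u : M) (P : 'M[int]_k) : ratrow (u *m P) = ratrow u *m ratM P.
Proof. exact: ratMM. Qed.

Lemma ratrow_inj (u v : M) : ratrow u = ratrow v -> u = v.
Proof. exact: ratM_inj. Qed.

Lemma ratrow0 : ratrow (0 : M) = 0.
Proof. by rewrite /ratrow map_mx0. Qed.

Definition wc2 (S : M -> Prop) (v : 'rV[rat]_k) :=
  exists l : seq (M * rat), (forall p, p \in l -> S p.1 /\ 0 <= p.2) /\
    v = \sum_(p <- l) p.2 *: ratrow p.1.

Lemma wc2_norm S l : (forall p, p \in l -> S p.1 /\ 0 <= p.2) ->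
  exists s (c : M -> rat), [/\ uniq s, forall u, u \in s -> S u /\ 0 <= c u &
    \sum_(p <- l) p.2 *: ratrow p.1 = \sum_(u <- s) c u *: ratrow u].
Proof.
elim: l => [|[u0 c0] l IH] hl.
  by exists [::], (fun _ => 0); split => //; rewrite !big_nil.
have [|s [c [us hs he]]] := IH.
  by move=> p pl; apply: hl; rewrite in_cons pl orbT.
have [S0 c00] : S u0 /\ 0 <= c0 := hl (u0, c0) (mem_head _ _).
rewrite big_cons /= he.
case: (boolP (u0 \in s)) => u0s.
- exists s, (fun w => c w + (if w == u0 then c0 else 0)); split => //.
    move=> u us'; have [Su cu] := hs u us'; split => //.
    by case: eqP => _; rewrite ?addr0 // addr_ge0.
  rewrite [RHS](eq_bigr (fun w => c w *: ratrow w + (if w == u0 then c0 *: ratrow w else 0))); last first.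
    by move=> w _; rewrite scalerDl; case: eqP; rewrite ?scale0r.
  by rewrite big_split /= (sum_delta (fun w => c0 *: ratrow w)) // addrC.
- exists (u0 :: s), (fun w => if w == u0 then c0 else c w); split.
  + by rewrite /= u0s us.
  + move=> u; rewrite in_cons; case: eqP => [-> _|_ /= us']; [done | exact: hs].
  + rewrite big_cons eqxx; congr (_ + _); apply: eq_big_seq => u us'.
    case: eqP => // eu; by move: u0s; rewrite -eu us'.
Qed.

Lemma wconeE S v : wcone S v <-> wc2 S v.
Proof.
split.
  case=> s [c [hs ->]]; exists [seq (u, c u) | u <- s]; split.
    by move=> p /mapP [u us ->] /=; exact: hs.
  by rewrite big_map.
case=> l [hl ->]; have [s [c [_ hs ->]]] := wc2_norm hl.
by exists s, c.
Qed.

Lemma wc2_0 S : wc2 S 0.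
Proof. by exists [::]; split => //; rewrite big_nil. Qed.

Lemma wc2_D S x y : wc2 S x -> wc2 S y -> wc2 S (x + y).
Proof.
case=> l1 [h1 ->] [l2 [h2 ->]]; exists (l1 ++ l2); split; last by rewrite big_cat.
by move=> p; rewrite mem_cat => /orP [/h1|/h2].
Qed.

Lemma wc2_Z S c x : 0 <= c -> wc2 S x -> wc2 S (c *: x).
Proof.
move=> c0 [l [hl ->]]; exists [seq (p.1, c * p.2) | p <- l]; split.
  move=> q /mapP [p pl ->] /=; have [Sp pp] := hl p pl; split => //.
  exact: mulr_ge0.
by rewrite big_map scaler_sumr; apply: eq_bigr => p _ /=; rewrite scalerA.
Qed.

Lemma wc2_one S u : S u -> wc2 S (ratrow u).
Proof.
move=> Su; exists [:: (u, 1)]; split; last by rewrite big_seq1 scale1r.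
by move=> p; rewrite inE => /eqP -> /=; split.
Qed.

Lemma wc2_mono (S S' : M -> Prop) x : (forall u, S u -> S' u) -> wc2 S x -> wc2 S' x.
Proof.
move=> hS [l [hl ->]]; exists l; split => // p pl; have [h1 h2] := hl p pl; split => //.
exact: hS.
Qed.

Lemma wc2_img (S S' : M -> Prop) (X : 'M[rat]_k) x :
  (forall u, S u -> exists u', S' u' /\ ratrow u' = ratrow u *m X) ->
  wc2 S x -> wc2 S' (x *m X).
Proof.
move=> hS [l [hl ->]]; elim: l hl => [|p l IH] hl.
  by rewrite big_nil mul0mx; exact: wc2_0.
rewrite big_cons mulmxDl -scalemxAl; apply: wc2_D.
  have [Sp pp] := hl p (mem_head _ _); have [u' [Su' e]] := hS _ Sp.
  by rewrite -e; apply: wc2_Z => //; exact: wc2_one.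
by apply: IH => q ql; apply: hl; rewrite in_cons ql orbT.
Qed.

Lemma wc2_preimg (S S' : M -> Prop) (X : 'M[rat]_k) v :
  (forall w, S' w -> exists u, S u /\ ratrow w = ratrow u *m X) ->
  wc2 S' v -> exists y, wc2 S y /\ v = y *m X.
Proof.
move=> hS [l [hl ->]]; elim: l hl => [|p l IH] hl.
  by exists 0; split; [exact: wc2_0 | rewrite big_nil mul0mx].
have [|y [hy ey]] := IH; first by move=> q ql; apply: hl; rewrite in_cons ql orbT.
have [Sp pp] := hl p (mem_head _ _); have [u [Su e]] := hS _ Sp.
exists (p.2 *: ratrow u + y); split.
  by apply: wc2_D => //; apply: wc2_Z => //; exact: wc2_one.
by rewrite big_cons ey mulmxDl -scalemxAl e.
Qed.

Lemma wc2_zero (S : M -> Prop) (X : 'M[rat]_k) x :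
  (forall u, S u -> ratrow u *m X = 0) -> wc2 S x -> x *m X = 0.
Proof.
move=> hS [l [hl ->]]; elim: l hl => [|p l IH] hl; first by rewrite big_nil mul0mx.
rewrite big_cons mulmxDl -scalemxAl hS ?scaler0 ?add0r; last by case: (hl p (mem_head _ _)).
by apply: IH => q ql; apply: hl; rewrite in_cons ql orbT.
Qed.

Lemma wc2_key S l x : (forall p, p \in l -> S p.1 /\ 0 <= p.2) ->
  x = \sum_(p <- l) p.2 *: ratrow p.1 -> wc2 S (- x) ->
  forall p, p \in l -> 0 < p.2 -> wc2 S (- ratrow p.1).
Proof.
move=> hl hx hn p pl pp.
have hy : wc2 S (\sum_(q <- rem p l) q.2 *: ratrow q.1).
  by exists (rem p l); split => // q /mem_rem; exact: hl.
have -> : - ratrow p.1 = p.2^-1 *: (- x + \sum_(q <- rem p l) q.2 *: ratrow q.1).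
  rewrite hx (big_rem p pl) /= opprD addrNK scalerN scalerA mulVf ?scale1r //.
  by rewrite lt0r_neq0.
apply: wc2_Z; first by rewrite invr_ge0 ltW.
exact: wc2_D.
Qed.

End Cone.

Lemma sum_count (V : nmodType) (I : eqType) (t s : seq I) (F : I -> V) :
  uniq t -> {subset s <= t} ->
  \sum_(u <- s) F u = \sum_(u <- t) F u *+ count_mem u s.
Proof.
move=> ut; elim: s => [|x s IH] hs.
  by rewrite big_nil big1 // => u _; rewrite mulr0n.
rewrite big_cons IH; last by move=> u us; apply: hs; rewrite in_cons us orbT.
rewrite [RHS](eq_bigr (fun u => (if u == x then F u else 0) + F u *+ count_mem u s)).
  rewrite big_split /= sum_delta //; apply: hs; exact: mem_head.
move=> u _ /=; rewrite mulrnDr; congr (_ + _).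
by rewrite eq_sym; case: eqP => [->|_]; rewrite ?mulr1n ?mulr0n.
Qed.

Section Grade.
Variables (C : fieldType) (A : comAlgType C) (k : nat).
Variable part : 'rV[int]_k -> A -> Prop.
Hypothesis hg : is_grading part.
Local Notation M := 'rV[int]_k.

Lemma part0 u : part u 0.
Proof. by case: hg => [[h _] _ _ _ _]. Qed.

Lemma partL u (c : C) a b : part u a -> part u b -> part u (c *: a + b).
Proof. by case: hg => [[_ h] _ _ _ _]; exact: h. Qed.

Lemma partD u a b : part u a -> part u b -> part u (a + b).
Proof. by move=> ha hb; have := partL 1 ha hb; rewrite scale1r. Qed.

Lemma partN u a : part u a -> part u (- a).
Proof. by move=> ha; have := partL (-1) ha (part0 u); rewrite scaleN1r addr0. Qed.

Lemma partMn u a n : part u a -> part u (a *+ n).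
Proof.
move=> ha; elim: n => [|n IH]; first by rewrite mulr0n; exact: part0.
by rewrite mulrS; exact: partD.
Qed.

Lemma indep (s : seq M) (f : M -> A) : uniq s -> (forall u, part u (f u)) ->
  \sum_(u <- s) f u = 0 -> forall u, u \in s -> f u = 0.
Proof. by case: hg => [_ _ _ _ h]; exact: h. Qed.

Lemma single F w u a : part u a -> u *m F = w -> coarse part F w a.
Proof.
move=> ha e; exists [:: u], (fun v => if v == u then a else 0); split.
- by move=> v; case: eqP => [->|_] //; exact: part0.
- by move=> v; rewrite inE => /eqP ->.
- by rewrite big_seq1 eqxx.
Qed.

Lemma NZ (s : seq M) (f : M -> A) : \sum_(u <- s) f u != 0 -> exists2 u, u \in s & f u != 0.
Proof.
move=> h; apply: NNPP => hn; move/negP: h; apply.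
apply/eqP/big1_seq => u /andP[_ us]; apply/eqP/negPn/negP => hu; apply: hn.
by exists u.
Qed.

Lemma JC F1 F2 w1 w2 a : coarse part F1 w1 a -> coarse part F2 w2 a ->
  exists s f, [/\ forall u, part u (f u),
    forall u, u \in s -> u *m F1 = w1 /\ u *m F2 = w2 & a = \sum_(u <- s) f u].
Proof.
case=> s1 [f1 [p1 e1 ->]] [s2 [f2 [p2 e2 ha]]].
pose t := undup (s1 ++ s2).
have ut : uniq t by exact: undup_uniq.
have sub1 : {subset s1 <= t} by move=> u us; rewrite mem_undup mem_cat us.
have sub2 : {subset s2 <= t} by move=> u us; rewrite mem_undup mem_cat us orbT.
have E1 := sum_count f1 ut sub1; have E2 := sum_count f2 ut sub2.
pose g u := f1 u *+ count_mem u s1 - f2 u *+ count_mem u s2.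
have g0 : forall u, u \in t -> g u = 0.
  apply: indep ut _ _.
    by move=> u; rewrite /g; apply: partD; [exact: partMn | apply: partN; exact: partMn].
  by rewrite /g sumrB -E1 -E2 ha subrr.
exists [seq u <- t | (u \in s1) && (u \in s2)], (fun u => f1 u *+ count_mem u s1); split.
- by move=> u; exact: partMn.
- by move=> u; rewrite mem_filter => /andP[/andP[h1 h2] _]; split; [exact: e1|exact: e2].
- rewrite E1 big_filter (bigID (fun u => (u \in s1) && (u \in s2))) /=.
  rewrite [X in _ + X]big1_seq ?addr0 //.
  move=> u /andP [hn ut']; case: (boolP (u \in s1)) => h1; last first.
    by rewrite (count_memPn h1) mulr0n.
  rewrite h1 /= in hn; have := g0 u ut'.
  by rewrite /g (count_memPn hn) mulr0n subr0.
Qed.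

Local Notation S := (weights (fun _ => True) part).

Lemma T1_S P w : weights (fun _ => True) (coarse part P) w ->
  exists u, S u /\ w = u *m P.
Proof.
case=> a [_ [s [f [pf ef ->]]] /eqP nz].
have [u us fu] := NZ nz; exists u; split; last by rewrite ef.
by exists (f u); split => //; exact/eqP.
Qed.

Lemma S_T1 P u : S u -> weights (fun _ => True) (coarse part P) (u *m P).
Proof. by case=> a [_ pa nz]; exists a; split => //; exact: (single pa (erefl _)). Qed.

Lemma mul1B (u : M) (P : 'M[int]_k) : u *m (1%:M - P) = u - u *m P.
Proof. by rewrite mulmxBr mulmx1. Qed.

Lemma W2_S P w : weights (coarse part P 0) (coarse part (1%:M - P)) w ->
  S w /\ w *m P = 0.
Proof.
case=> a [h1 h2 /eqP nz]; have [s [f [pf ef ea]]] := JC h1 h2.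
rewrite ea in nz; have [u us fu] := NZ nz; have [eu1 eu2] := ef u us.
rewrite mul1B eu1 subr0 in eu2; rewrite -eu2; split => //.
by exists (f u); split => //; exact/eqP.
Qed.


Lemma map1B (P : 'M[int]_k) :
  map_mx (fun z : int => (z%:~R : rat)) (1%:M - P) = 1%:M - ratM P.
Proof. by rewrite map_mxB map_mx1. Qed.

Lemma ker_char P : lattice_splitting P -> splitting_props part P ->
  forall x, (wc2 S x /\ wc2 S (-x)) <-> x *m ratM P = 0.
Proof.
move=> hP; rewrite /splitting_props /=; case=> h1 h2 _ x; split.
- case=> hx hnx.
  pose V := fun y : 'rV[rat]_k => exists c : rat, y = c *: (x *m ratM P).
  apply: (h1 V).
  + by exists 0; rewrite scale0r.
  + by move=> y z [c1 ->] [c2 ->]; exists (c1 + c2); rewrite scalerDl.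
  + by move=> c y [c1 ->]; exists (c * c1); rewrite scalerA.
  + move=> y [c ->]; apply/wconeE; rewrite scalemxAl; apply: (wc2_img (S := S)).
      move=> u Su; exists (u *m P); split; [exact: S_T1 | exact: ratrowM].
    case: (lerP 0 c) => hc; first exact: wc2_Z.
    have -> : c *: x = (- c) *: (- x) by rewrite scalerN scaleNr opprK.
    by apply: wc2_Z => //; rewrite oppr_ge0 ltW.
  + by exists 1; rewrite scale1r.
- move=> hx0.
  have hQ : forall y : 'rV[rat]_k, y *m ratM P = 0 -> wc2 S y.
    move=> y hy.
    have : wcone (weights (coarse part P 0) (coarse part (1%:M - P))) y.
      by apply/h2; exists y; rewrite map1B mulmxBr mulmx1 hy subr0.
    move/wconeE; apply: wc2_mono => w /W2_S [] //.
  by split; apply: hQ => //; rewrite mulNmx hx0 oppr0.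
Qed.

Lemma exist_P : exists P, lattice_splitting P /\ splitting_props part P.
Proof.
pose Lsp := fun x => wc2 S x /\ wc2 S (-x).
have [P [hP hk]] : exists P : 'M[int]_k,
    P *m P = P /\ forall x, Lsp x <-> x *m ratM P = 0.
  apply: exists_idem.
  - by split; rewrite ?oppr0; exact: wc2_0.
  - move=> x y [hx hnx] [hy hny]; split; first exact: wc2_D.
    by rewrite opprD; exact: wc2_D.
  - move=> c x [hx hnx]; case: (lerP 0 c) => hc.
      by split; [exact: wc2_Z | rewrite -scalerN; exact: wc2_Z].
    have hc' : 0 <= - c by rewrite oppr_ge0 ltW.
    have e : c *: x = (- c) *: (- x) by rewrite scalerN scaleNr opprK.
    split; first by rewrite e; exact: wc2_Z.
    by rewrite -scaleNr; exact: wc2_Z.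
exists P; split => //; rewrite /splitting_props /=; split.
- move=> V V0 VD VZ Vc x Vx.
  have pre : forall y, V y -> exists z, wc2 S z /\ y = z *m ratM P.
    move=> y /Vc /wconeE; apply: wc2_preimg => w /T1_S [u [Su ->]].
    by exists u; split => //; exact: ratrowM.
  have [y [hy ey]] := pre x Vx.
  have [y' [hy' ey']] : exists z, wc2 S z /\ - x = z *m ratM P.
    by apply: pre; rewrite -scaleN1r; exact: VZ.
  have hyy : Lsp (y + y') by apply/hk; rewrite mulmxDl -ey -ey' subrr.
  have : Lsp y.
    split => //; have -> : - y = y' + - (y + y') by rewrite opprD addrCA subrr addr0.
    exact: wc2_D hy' hyy.2.
  by move/hk; rewrite -ey.
- move=> v; split.
  + move/wconeE => hv; exists v.
    have hv0 : v *m ratM P = 0.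
      by apply: wc2_zero hv => w /W2_S [_ hw]; rewrite -ratrowM hw ratrow0.
    by rewrite map1B mulmxBr mulmx1 hv0 subr0.
  + case=> x ->; rewrite map1B.
    have hv0 : x *m (1%:M - ratM P) *m ratM P = 0.
      by rewrite -mulmxA mulmxBl mul1mx -ratMM hP subrr mulmx0.
    have [[l [hl ev]] hn] := (hk _).2 hv0.
    apply/wconeE; exists [seq p <- l | 0 < p.2]; split.
      move=> p; rewrite mem_filter => /andP [pp pl]; have [Sp _] := hl p pl.
      split; last exact: ltW.
      have hz : ratrow p.1 *m ratM P = 0.
        by apply/hk; split; [exact: wc2_one | exact: (wc2_key hl ev hn pl pp)].
      have hu : p.1 *m P = 0 by apply: ratrow_inj; rewrite ratrowM hz ratrow0.
      case: Sp => a [_ pa nz]; exists a; split => //.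
        exact: single pa hu.
      by apply: single pa _; rewrite mul1B hu subr0.
    rewrite ev big_filter [RHS]big_mkcond /=; apply: eq_big_seq => p pl.
    case: ifP => // /negbT; rewrite -leNgt => hp; have [_ hp'] := hl p pl.
    have -> : p.2 = 0 by apply/eqP; rewrite eq_le hp hp'.
    by rewrite scale0r.
- move=> a; split.
  + case=> h1 h2; have [s [f [pf ef ->]]] := JC h1 h2.
    rewrite big_seq; apply: big_ind; [exact: part0 | move=> ? ? ? ?; exact: partD |].
    move=> u us; have [e1 e2] := ef u us; rewrite mul1B e1 subr0 in e2.
    by have := pf u; rewrite e2.
  + by move=> ha; split; apply: (single ha); exact: mul0mx.
Qed.

Lemma N1_sub P P' : (forall x : 'rV[rat]_k, x *m ratM P' = 0 -> x *m ratM P = 0) ->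
  P *m P = P -> P' *m P' = P' -> forall n, N1_of P n -> N1_of P' n.
Proof.
move=> hk hP hP' n [m ->].
have hE : (1%:M - P') *m (1%:M - P) = 1%:M - P'.
  apply: ratM_inj; rewrite ratMM; apply/row_matrixP => i; rewrite row_mul.
  have hr : row i (ratM (1%:M - P')) *m ratM P = 0.
    apply: hk; rewrite -row_mul -ratMM mulmxBl mul1mx hP' subrr /ratM map_mx0.
    by rewrite row0.
  by rewrite [ratM (1%:M - P)]map1B mulmxBr mulmx1 hr subr0.
exists (P *m m); apply/eqP; rewrite -subr_eq0 -{1}(mul1mx (P *m m)) -mulmxBl -hE.
by rewrite -mulmxA (mulmxA (1%:M - P) P) (mulmxBl 1%:M P P) mul1mx hP subrr mul0mx mulmx0.
Qed.

Lemma mainGen :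
  (exists P : 'M[int]_k, lattice_splitting P /\ splitting_props part P) /\
  (forall P P' : 'M[int]_k,
      lattice_splitting P -> splitting_props part P ->
      lattice_splitting P' -> splitting_props part P' ->
      forall n, N1_of P n <-> N1_of P' n).
Proof.
split; first exact: exist_P.
move=> P P' hP sP hP' sP' n; have k1 := ker_char hP sP; have k2 := ker_char hP' sP'.
split; apply: N1_sub => // x; [by move/k2/k1 | by move/k1/k2].
Qed.

End Grade.

Local Open Scope complex_scope.

Theorem mainTheorem2 (R : realType) (k : nat) (A : comAlgType R[i])
    (part : 'rV[int]_k -> A -> Prop) :
  affine_T_variety part ->
  (exists P : 'M[int]_k, lattice_splitting P /\ splitting_props part P) /\
  (forall P P' : 'M[int]_k,
      lattice_splitting P -> splitting_props part P ->
      lattice_splitting P' -> splitting_props part P' ->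
      forall n, N1_of P n <-> N1_of P' n).
Proof.
case=> _ _ _ hg _; exact: (mainGen hg).
Qed.
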